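(* Let $G$ be a line graph with vertex order $v_1,\ldots,v_n$, let $D$ be a minimal dominating set of $G$, let $u,w\in D$ be adjacent, let $v\in P_D(u)$, and let $X_{uv}$, $D^*$, $Z_{uv}$ be as in the context. Then: $X_{uv}=\emptyset$; each vertex of $Z_{uv}$ is adjacent to exactly one vertex of $P_{D^*}(v)\setminus N[u]$; and each vertex of $P_{D^*}(v)\setminus N[u]$ is adjacent to exactly one vertex of $Z_{uv}$.
   Context: Graphs are finite, simple, undirected; $N(x)$ is the open and $N[x]=N(x)\cup\{x\}$ the closed neighborhood, $N[S]=\bigcup_{x\in S}N[x]$. A line graph is a graph isomorphic to $L(H)$ for some graph $H$, where $L(H)$ has vertex set $E(H)$ and two vertices are adjacent iff the edges share an endpoint. A dominating set is $D\subseteq V(G)$ with $N[D]=V(G)$; it is minimal if no proper subset is dominating. For a dominating set $D$ and $x\in D$, a vertex $y$ is private for $x$ if $y\in N[x]\setminus N[D\setminus\{x\}]$; $P_D[x]$ is the set of such $y$ and $P_D(x)=P_D[x]\cap N(x)$. Fix an order $v_1,\ldots,v_n$ of $V(G)$. Greedy removal from a dominating set $D'$: while the current set $S$ is not a minimal dominating set, remove from $S$ the vertex $v_i$ of smallest index such that $S\setminus\{v_i\}$ is still dominating. Given $D,u,v$: $X_{uv}$ is built by starting from $\emptyset$ and repeatedly adding the smallest-index vertex of $P_D(u)\setminus N[\{v\}\cup X_{uv}]$ while this set is nonempty. Let $D'=(D\setminus\{u\})\cup X_{uv}\cup\{v\}$, let $D^*$ be the result of greedy removal from $D'$, and $Z_{uv}=D'\setminus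 D^*$. *)

(* Defs.v *)
(* Graphs on vertex set 'I_n; the vertex order v_1,...,v_n is
   the natural order of 'I_n (v_{i+1} = the ordinal i). *)
From mathcomp Require Import all_boot.
Set Implicit Arguments. Unset Strict Implicit. Unset Printing Implicit Defensive.

Section Defs.
Variable n : nat.
Implicit Types (e : rel 'I_n) (S D X : {set 'I_n}) (x y u v : 'I_n).

Definition onbr e x : {set 'I_n} := [set y | e x y].
Definition cnbr e x : {set 'I_n} := [set y | (y == x) || e x y].
Definition cnbrS e S : {set 'I_n} := \bigcup_(x in S) cnbr e x.

Definition dominating e D : bool := cnbrS e D == [set: 'I_n].
Definition minimal_dominating e D : bool :=
  dominating e D && [forall D' : {set 'I_n}, (D' \proper D) ==> ~~ dominating e D'].

Definition priv_closed e D x : {set 'I_n} := cnbr e x :\: cnbrS e (D :\ x).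
Definition priv_open e D x : {set 'I_n} := priv_closed e D x :&: onbr e x.

Definition minpick (A : {set 'I_n}) : option 'I_n :=
  [pick x in A | [forall y in A, (x <= y)%N]].

Definition greedy_step e S : {set 'I_n} :=
  if minimal_dominating e S then S else
  match minpick [set x in S | dominating e (S :\ x)] with
  | Some x => S :\ x
  | None => S
  end.
(* each non-trivial step removes a vertex, so #|'I_n| iterations reach the end *)
Definition greedy_removal e S : {set 'I_n} := iter n.+1 (greedy_step e) S.

Definition X_step e D u v X : {set 'I_n} :=
  match minpick (priv_open e D u :\: cnbrS e (v |: X)) with
  | Some x => x |: X
  | None => X
  end.
Definition X_uv e D u v : {set 'I_n} := iter n.+1 (X_step e D u v) set0.

Definition D' e D u v : {set 'I_n} := ((D :\ u) :|: X_uv e D u v) :|: [set v].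
Definition Dstar e D u v : {set 'I_n} := greedy_removal e (D' e D u v).
Definition Z_uv e D u v : {set 'I_n} := D' e D u v :\: Dstar e D u v.

End Defs.

(* G (adjacency e on 'I_n) is a line graph: isomorphic to L(H) for a finite simple
   graph H on 'I_m, via f mapping each vertex of G to an edge {a,b} of H. *)
Definition is_line_graph (n : nat) (e : rel 'I_n) : Prop :=
  exists (m : nat) (eH : rel 'I_m) (f : 'I_n -> {set 'I_m}),
    (symmetric eH /\ irreflexive eH) /\
    [/\ injective f,
        (forall x, exists a b, eH a b /\ f x = [set a; b]),
        (forall a b, eH a b -> exists x, f x = [set a; b]) &
        (forall x y, e x y = (x != y) && (f x :&: f y != set0))].

(* Main.v *)
Require Import Defs.
From mathcomp Require Import all_boot.

Lemma cnbrSP n (e : rel 'I_n) (S : {set 'I_n}) y :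
  reflect (exists2 x, x \in S & y \in cnbr e x) (y \in cnbrS e S).
Proof. exact: bigcupP. Qed.

Lemma domP n (e : rel 'I_n) (S : {set 'I_n}) : dominating e S -> forall y, y \in cnbrS e S.
Proof. by move/eqP=> H y; rewrite H inE. Qed.

Lemma domI n (e : rel 'I_n) (S : {set 'I_n}) : (forall y, y \in cnbrS e S) -> dominating e S.
Proof. by move=> H; apply/eqP/setP=> y; rewrite inE H. Qed.

Lemma greedy_step_ok n (e : rel 'I_n) (S : {set 'I_n}) : dominating e S ->
  dominating e (greedy_step e S) /\ greedy_step e S \subset S.
Proof.
move=> HS; rewrite /greedy_step; case: ifP => _; first by split=> //; exact: subxx.
rewrite /minpick; case: pickP => [x /andP [Hx _] | _]; last by split=> //; exact: subxx.
rewrite inE in Hx; case/andP: Hx => _ dx; split=> //; exact: subD1set.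
Qed.

Lemma greedy_ok n (e : rel 'I_n) (S : {set 'I_n}) : dominating e S ->
  dominating e (greedy_removal e S) /\ greedy_removal e S \subset S.
Proof.
move=> HS; rewrite /greedy_removal.
suff H : forall k, dominating e (iter k (greedy_step e) S) /\ iter k (greedy_step e) S \subset S by apply: H.
elim=> [|k [IH1 IH2]] /=; first by split=> //; exact: subxx.
have [h1 h2] := @greedy_step_ok _ e _ IH1; split=> //; exact: subset_trans h2 IH2.
Qed.

Lemma two_test m (A : {set 'I_m}) a b q r s : A = [set a; b] -> q \in A -> r \in A -> s \in A -> q != r -> s = q \/ s = r.
Proof.
move=> ->; rewrite !inE.
by move=> /orP[]/eqP-> /orP[]/eqP-> /orP[]/eqP->; rewrite ?eqxx //= => _; auto.
Qed.

Arguments cnbrSP {n e S y}.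
Arguments domP {n e S}.
Arguments domI {n e S}.
Arguments greedy_ok {n e S}.

Theorem lemma4 (n : nat) (e : rel 'I_n) (D : {set 'I_n}) (u w v : 'I_n) :
  is_line_graph e ->
  minimal_dominating e D ->
  u \in D -> w \in D -> e u w ->
  v \in priv_open e D u ->
  [/\ X_uv e D u v = set0,
      (forall z, z \in Z_uv e D u v ->
         #|[set y in priv_open e (Dstar e D u v) v :\: cnbr e u | e z y]| = 1) &
      (forall y, y \in priv_open e (Dstar e D u v) v :\: cnbr e u ->
         #|[set z in Z_uv e D u v | e y z]| = 1)].
Proof.
move=> [m [eH [f [[eHsym eHirr] [finj fedge _ fadj]]]]] /andP[Ddom Dmin] uD wD euw vP.
have esym : forall x y, e x y = e y x by move=> x y; rewrite !fadj eq_sym setIC.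
have eirr : forall x, e x x = false by move=> x; rewrite fadj eqxx.
have share : forall x y, e x y -> exists2 q, q \in f x & q \in f y.
  move=> x y; rewrite fadj => /andP[_ /set0Pn [q]]; rewrite inE => /andP[??]; by exists q.
have adj : forall x y q, x != y -> q \in f x -> q \in f y -> e x y.
  move=> x y q nxy qx qy; rewrite fadj nxy /=; apply/set0Pn; exists q; by rewrite inE qx qy.
have two : forall x q r s, q \in f x -> r \in f x -> s \in f x -> q != r -> s = q \/ s = r.
  move=> x q r s; have [a [b [_ E]]] := fedge x; exact: two_test E.
have diff1 : forall x y q r s, q \in f x -> r \in f x -> q \notin f y -> r \notin f y ->
    s \in f x -> s \in f y -> q = r.
  move=> x y q r s qx rx qy ry sx sy; case: (eqVneq q r) => // nqr.
  by case: (two _ _ _ _ qx rx sx nqr) => Es; [move: qy | move: ry]; rewrite -Es sy.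
have Ddom' := domP Ddom.
have Dpriv : forall z, z \in D -> exists p, p \in cnbr e z /\ p \notin cnbrS e (D :\ z).
  move=> z zD; move/implyP: (forallP Dmin (D :\ z)) => H; have nd := H (properD1 zD).
  case: (boolP [forall p, p \in cnbrS e (D :\ z)]) => [/forallP H'|/forallPn [p pn]].
    by rewrite (domI H') in nd.
  exists p; split => //; case/cnbrSP: (Ddom' p) => x xD px.
  case: (eqVneq x z) => [<-|nxz] //.
  by case/negP: pn; apply/cnbrSP; exists x => //; rewrite !inE nxz xD.
have notin : forall (S : {set 'I_n}) x y, y \notin cnbrS e S -> x \in S -> (y != x) && ~~ e x y.
  move=> S x y yn xS; rewrite -negb_or; apply: contra yn => H.
  by apply/cnbrSP; exists x => //; rewrite inE.
rewrite /priv_open /priv_closed !inE in vP; case/andP: vP => /andP[vnot _] euv.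
have vpriv : forall x, x \in D -> x != u -> (x != v) && ~~ e x v.
  move=> x xD xu; have := notin _ x v vnot; rewrite !inE xu xD => /(_ isT) /andP[H1 H2].
  by rewrite eq_sym H1.
have vnD : v \notin D.
  apply/negP => vD; have vu : v != u by apply: contraTneq euv => ->; rewrite eirr.
  by have := vpriv v vD vu; rewrite eqxx.
have wu : w != u by apply: contraTneq euw => ->; rewrite eirr.
have H0 : priv_open e D u :\: cnbrS e (v |: set0) = set0.
  apply/eqP; rewrite setD_eq0; apply/subsetP => p pP.
  apply/cnbrSP; exists v; first by rewrite !inE eqxx.
  rewrite /priv_open /priv_closed !inE in pP; case/andP: pP => /andP[pnot _] eup.
  have /andP [pw nwp] := notin _ w p pnot (ltac:(by rewrite !inE wu wD)).
  have [q qu qp] := share _ _ eup.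
  have [s su sw] := share _ _ euw.
  have [r ru rv] := share _ _ euv.
  have qw : q \notin f w by apply: contra nwp => qw; apply: (adj _ _ q) => //; rewrite eq_sym.
  have /andP [wv nwv] := vpriv w wD wu.
  have rw : r \notin f w by apply: contra nwv => rw; apply: (adj _ _ r).
  have Eqr := diff1 _ _ _ _ _ qu ru qw rw su sw; subst r.
  rewrite inE; case: (eqVneq p v) => //= npv; apply: (adj _ _ q) => //; by rewrite eq_sym.
have Xe : X_uv e D u v = set0.
  rewrite /X_uv; suff H : forall k, iter k (X_step e D u v) set0 = set0 by apply: H.
  elim=> //= k ->; rewrite /X_step H0 /minpick; case: pickP => // x; by rewrite inE.
have D'e : D' e D u v = (D :\ u) :|: [set v] by rewrite /D' Xe setU0.
have D'dom : dominating e (D' e D u v).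
  apply: domI => y; rewrite D'e; case/cnbrSP: (Ddom' y) => x xD yx.
  case: (eqVneq x u) => [exu|xu]; last by apply/cnbrSP; exists x => //; rewrite !inE xu xD.
  subst x; case: (boolP (y \in cnbrS e (D :\ u))) => [/cnbrSP [x xD' yx']|ynot].
    by apply/cnbrSP; exists x => //; rewrite inE xD'.
  case: (eqVneq y u) => [->|yu].
    by apply/cnbrSP; exists w; rewrite !inE ?wu ?wD // esym euw orbT.
  have : y \in priv_open e D u :\: cnbrS e (v |: set0) = false by rewrite H0 inE.
  rewrite inE /priv_open /priv_closed !inE ynot /=.
  move: yx; rewrite inE (negbTE yu) /= => ->; rewrite andbT.
rewrite andbT => /negbFE /cnbrSP [x].
  by rewrite !inE orbF => /eqP -> yv; apply/cnbrSP; exists v; rewrite // !inE ?eqxx ?orbT.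
have [DSdom DSsub] := greedy_ok D'dom.
rewrite -/(Dstar e D u v) in DSdom DSsub.
set DS := Dstar e D u v in DSdom DSsub *.
have DSdom' := domP DSdom.
have DSin : forall x, x \in DS -> (x \in D /\ x != u) \/ x = v.
  move=> x /(subsetP DSsub); rewrite D'e !inE => /orP[/andP[xu xD]|/eqP->]; auto.
have vDS : v \in DS.
  case/cnbrSP: (DSdom' v) => x xDS; case: (DSin x xDS) => [[xD xu]|<-] //.
  have /andP [xv nexv] := vpriv x xD xu.
  by rewrite inE eq_sym (negbTE xv) (negbTE nexv).
have Zin : forall z, z \in Z_uv e D u v -> [/\ z \in D, z != u, z != v & z \notin DS].
  move=> z; rewrite /Z_uv -/DS D'e !inE => /andP [zDS /orP [/andP[zu zD]|/eqP zv]].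
    split=> //; apply: contraNneq zDS => ->; exact: vDS.
  by move: zDS; rewrite zv vDS.
have Zdom : forall z, z \in Z_uv e D u v ->
    exists x, [/\ x \in DS, x \in D, x != u, x != z & e x z].
  move=> z zZ; have [zD zu zv zDS] := Zin z zZ.
  case/cnbrSP: (DSdom' z) => x xDS; rewrite inE => zx.
  case: (DSin x xDS) => [[xD xu]|xv].
    have xz : x != z by apply: contraNneq zDS => <-.
    exists x; split=> //; move: zx; by rewrite eq_sym (negbTE xz).
  subst x; have /andP [_ nzv] := vpriv z zD zu.
  by move: zx; rewrite (negbTE zv) esym (negbTE nzv).
have Zpriv : forall z, z \in Z_uv e D u v ->
    exists x p, [/\ x \in DS, x \in D, x != u, x != z & e x z] /\ (e z p /\
      forall x', x' \in D -> x' != z -> p \notin cnbr e x').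
  move=> z zZ; have [zD zu zv zDS] := Zin z zZ.
  have [x [xDS xD xu xz exz]] := Zdom z zZ.
  have [p [pz pnot]] := Dpriv z zD.
  have pnx : forall x', x' \in D -> x' != z -> p \notin cnbr e x'.
    move=> x' x'D x'z; have := notin _ x' p pnot; rewrite !inE x'z x'D => /(_ isT).
    by rewrite negb_or.
  exists x, p; do !split=> //; move: pz; rewrite inE; case: (eqVneq p z) => [epz _|_ //].
  by move: (pnx x xD xz); rewrite inE epz eq_sym (negbTE xz) exz.
have Yin : forall y, y \in priv_open e DS v :\: cnbr e u ->
    [/\ y \notin cnbr e u, e v y & forall x, x \in DS -> x != v -> y \notin cnbr e x].
  move=> y; rewrite in_setD => /andP [ynu]; rewrite /priv_open /priv_closed.
  move=> /setIP[/setDP[_ ynot]]; rewrite inE => evy; split=> // x xDS xv.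
  have := notin _ x y ynot; rewrite !inE xv xDS => /(_ isT); by rewrite negb_or.
have shareN : forall x y t, y \notin cnbr e x -> t \in f x -> t \in f y -> False.
  move=> x y t yx tx ty.
  have xy : x != y by apply: contraNneq yx => <-; rewrite inE eqxx.
  by move/negP: yx; apply; rewrite inE (adj _ _ t) ?orbT.
have [b bu bv] := share _ _ euv.
have uniq1 : forall z x y1 y2, e z y1 -> e z y2 -> y1 \notin cnbr e x ->
    y2 \notin cnbr e x -> e x z -> e v y1 -> e v y2 -> y1 \notin cnbr e u ->
    y2 \notin cnbr e u -> z != v -> ~~ e z v -> y1 = y2.
  move=> z x y1 y2 ezy1 ezy2 y1x y2x exz evy1 evy2 y1u y2u zv nezv.
  have [t1 t1z t1y] := share _ _ ezy1.
  have [t2 t2z t2y] := share _ _ ezy2.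
  have [s sx sz] := share _ _ exz.
  have t1x : t1 \notin f x by apply/negP => H; exact: shareN _ _ _ y1x H t1y.
  have t2x : t2 \notin f x by apply/negP => H; exact: shareN _ _ _ y2x H t2y.
  have E1 := diff1 _ _ _ _ _ t1z t2z t1x t2x sz sx; subst t2.
  have [r1 r1v r1y] := share _ _ evy1.
  have [r2 r2v r2y] := share _ _ evy2.
  have r1u : r1 \notin f u by apply/negP => H; exact: shareN _ _ _ y1u H r1y.
  have r2u : r2 \notin f u by apply/negP => H; exact: shareN _ _ _ y2u H r2y.
  have E2 := diff1 _ _ _ _ _ r1v r2v r1u r2u bv bu; subst r2.
  have tr : t1 != r1.
    by apply: contraNneq nezv => E; apply: (adj _ _ t1) => //; rewrite E.
  apply: finj; apply/setP => s'; apply/idP/idP => H.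
    by case: (two _ _ _ _ t1y r1y H tr) => ->.
  by case: (two _ _ _ _ t2y r2y H tr) => ->.
split=> //.
- move=> z zZ; have [zD zu zv zDS] := Zin z zZ.
  have [x [p [[xDS xD xu xz exz] [ezp pnx]]]] := Zpriv z zZ.
  have xv : x != v by apply: contraNneq vnD => <-.
  have nezv : ~~ e z v by case/andP: (vpriv z zD zu).
  have pnu : p \notin cnbr e u by apply: pnx => //; rewrite eq_sym.
  have evp : e v p.
    case/cnbrSP: (DSdom' p) => x' x'DS px'; case: (DSin x' x'DS) => [[x'D x'u]|ex'].
      have x'z : x' != z by apply: contraNneq zDS => <-.
      by move: (pnx x' x'D x'z); rewrite px'.
    subst x'; move: px'; rewrite inE; case: (eqVneq p v) => [epv _|//].
    by move: pnu; rewrite epv inE euv orbT.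
  have pY : p \in priv_open e DS v :\: cnbr e u.
    rewrite in_setD pnu /priv_open /priv_closed !inE evp orbT !andbT /=.
    apply/negP => /cnbrSP [x' x'DS' px']; move: x'DS'; rewrite !inE => /andP [x'v x'DS].
    case: (DSin x' x'DS) => [[x'D x'u]|ex']; last by rewrite ex' eqxx in x'v.
    have x'z : x' != z by apply: contraNneq zDS => <-.
    by move: (pnx x' x'D x'z); rewrite px'.
  suff -> : [set y in priv_open e DS v :\: cnbr e u | e z y] = [set p] by rewrite cards1.
  apply/setP => y; rewrite inE [y \in [set p]]inE.
  apply/andP/eqP => [[yY ezy]|->]; last by split.
  have [ynu evy yx] := Yin y yY.
  have [_ _ px] := Yin p pY.
  exact: (uniq1 z x y p ezy ezp (yx x xDS xv) (px x xDS xv) exz evy evp ynu pnu zv nezv).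
- move=> y yY; have [ynu evy yx] := Yin y yY.
  case/cnbrSP: (Ddom' y) => x xD yx0.
  have xu : x != u by apply: contraNneq ynu => <-.
  have xv : x != v by apply: contraNneq vnD => <-.
  have xDS : x \notin DS by apply/negP => xDS; move: (yx x xDS xv); rewrite yx0.
  have xZ : x \in Z_uv e D u v by rewrite /Z_uv -/DS D'e in_setD xDS !inE xu xD.
  have eyx : e y x.
    move: yx0; rewrite inE; case: (eqVneq y x) => [eyx _|_ /=]; last by rewrite esym.
    subst y; have /andP [_ H] := vpriv x xD xu; by rewrite esym evy in H.
  have uniq2 : forall z1 z2, z1 \in Z_uv e D u v -> z2 \in Z_uv e D u v ->
      e y z1 -> e y z2 -> z1 = z2.
    move=> z1 z2 z1Z z2Z ey1 ey2; case: (eqVneq z1 z2) => // n12; exfalso.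
    have [z1D z1u z1v _] := Zin z1 z1Z.
    have [z2D z2u z2v _] := Zin z2 z2Z.
    have [x1 [p1 [[x1DS x1D x1u x1z1 ex1z1] [ez1p1 p1nx]]]] := Zpriv z1 z1Z.
    have x1v : x1 != v by apply: contraNneq vnD => <-.
    have [t1 t1y t1z] := share _ _ ey1.
    have [t2 t2y t2z] := share _ _ ey2.
    have [r rv ry] := share _ _ evy.
    have t1v : t1 \notin f v.
      apply/negP => H; case/andP: (vpriv z1 z1D z1u) => _ /negP; apply.
      exact: (adj _ _ t1).
    have t2v : t2 \notin f v.
      apply/negP => H; case/andP: (vpriv z2 z2D z2u) => _ /negP; apply.
      exact: (adj _ _ t2).
    have E := diff1 _ _ _ _ _ t1y t2y t1v t2v ry rv; subst t2.
    have t1x : t1 \notin f x1 by apply/negP => H; exact: shareN _ _ _ (yx x1 x1DS x1v) H t1y.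
    have [s1 s1x s1z] := share _ _ ex1z1.
    have ts : t1 != s1 by apply: contraNneq t1x => ->.
    have [q qz qp] := share _ _ ez1p1.
    case: (two _ _ _ _ t1z s1z qz ts) => Eq; subst q.
      by apply: (shareN _ _ _ (p1nx z2 z2D _) t2z qp); rewrite eq_sym.
    exact: (shareN _ _ _ (p1nx x1 x1D x1z1) s1x qp).
  suff -> : [set z in Z_uv e D u v | e y z] = [set x] by rewrite cards1.
  apply/setP => z; rewrite inE [z \in [set x]]inE.
  apply/andP/eqP => [[zZ eyz]|->]; last by split.
  exact: uniq2.
Qed.
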